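(* There is a constant $K_1>0$ such that for any finite $B,C\subset\mathbb Z^b\times\{0,1\}$, every $M\in\mathcal M^B_C$ and every $s\geq0$, $$|\!|\!| M|\!|\!|_s\leq K_1\max_{i\in\overline C}|\!|\!| M_{\{i\}}|\!|\!|_{s+b},$$ where $M_{\{i\}}$ is the submatrix of $M$ formed by the rows indexed by $\{(i,a)\in C\}$.
   Context: $d,\nu\geq1$, $b=\nu+d$. For $n\in\mathbb Z^b$, $|n|=\max_i|n_i|$, $\langle n\rangle=\max(|n|,1)$. For finite $B,C\subset\mathbb Z^b\times\{0,1\}$, $\mathcal M^B_C$ is the space of complex matrices $(M_k^{k'})_{k\in C,k'\in B}$; $\overline B,\overline C$ are the projections on $\mathbb Z^b$; $M_i^{i'}$ is the block with rows $\{(i,a)\in C\}$ and columns $\{(i',a')\in B\}$. A norm $|\cdot|$ is fixed on complex matrices of size at most $2\times2$ with $|UW|\leq|U||W|$ and $|U|\leq|W|$ if $U$ is a submatrix of $W$. For a matrix $M$ with row set $C'$ and column set $B'$, $[M(n)]:=\max_{i-i'=n,i\in\overline{C'},i'\in\overline{B'}}|M_i^{i'}|$ if $n\in\overline{C'}-\overline{B'}$, $0$ otherwise, and $|\!|\!| M|\!|\!|_s^2:=K_0\sum_n[M(n)]^2\langle n\rangle^{2s}$ with $K_0>0$ a fixed constant. *)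

(* Defs.v *)
From HB Require Import structures.
From mathcomp Require Import all_boot all_order all_algebra.
From mathcomp Require Import finmap.
From mathcomp Require Import complex.
From mathcomp Require Import reals exp.

Set Implicit Arguments. Unset Strict Implicit. Unset Printing Implicit Defensive.
Import Order.TTheory GRing.Theory Num.Theory.
Local Open Scope ring_scope.

(* Points of Z^b x {0,1}: the bit {0,1} is encoded by bool (false = 0, true = 1). *)
Definition pt (b : nat) := ('rV[int]_b * bool)%type.

Definition supnorm (b : nat) (n : 'rV[int]_b) : nat := \max_(j < b) `|n ord0 j|%N.
Definition japan (R : realType) (b : nat) (n : 'rV[int]_b) : R := (maxn (supnorm n) 1)%:R.

Definition cmod (R : realType) (z : R[i]) : R := Num.sqrt (complex.Re z ^+ 2 + complex.Im z ^+ 2).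

Definition small_norm (R : realType) (nrm : forall m n, 'M[R[i]]_(m, n) -> R) : Prop :=
  [/\ (forall m n (U : 'M[R[i]]_(m, n)), (0 < m <= 2)%N -> (0 < n <= 2)%N ->
         0 <= nrm m n U /\ (nrm m n U = 0 <-> U = 0)),
      (forall m n (a : R[i]) (U : 'M[R[i]]_(m, n)), (0 < m <= 2)%N -> (0 < n <= 2)%N ->
         nrm m n (a *: U) = cmod a * nrm m n U),
      (forall m n (U W : 'M[R[i]]_(m, n)), (0 < m <= 2)%N -> (0 < n <= 2)%N ->
         nrm m n (U + W) <= nrm m n U + nrm m n W),
      (forall m n p (U : 'M[R[i]]_(m, n)) (W : 'M[R[i]]_(n, p)),
         (0 < m <= 2)%N -> (0 < n <= 2)%N -> (0 < p <= 2)%N ->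
         nrm m p (U *m W) <= nrm m n U * nrm n p W) &
      (forall m n m' n' (f : 'I_m' -> 'I_m) (g : 'I_n' -> 'I_n) (W : 'M[R[i]]_(m, n)),
         (0 < m <= 2)%N -> (0 < n <= 2)%N -> (0 < m')%N -> (0 < n')%N ->
         {mono f : x y / (x < y)%N} -> {mono g : x y / (x < y)%N} ->
         nrm m' n' (mxsub f g W) <= nrm m n W)].

Section Defs.
Local Open Scope fset_scope.
Variables (R : realType) (b : nat) (nrm : forall m n, 'M[R[i]]_(m, n) -> R) (K0 : R).

Definition proj (A : {fset pt b}) : {fset 'rV[int]_b} := [fset p.1 | p in A].

Definition bits (A : {fset pt b}) (i : 'rV[int]_b) : seq bool :=
  [seq a <- [:: false; true] | (i, a) \in A].

Definition block (B C : {fset pt b}) (M : pt b -> pt b -> R[i]) (i i' : 'rV[int]_b)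
  : 'M[R[i]]_(size (bits C i), size (bits B i')) :=
  \matrix_(k, l) M (i, nth false (bits C i) k) (i', nth false (bits B i') l).

Definition blocknorm B C M i i' : R := nrm (block B C M i i').

(* [M(n)] : max of |M_i^{i'}| over i - i' = n (0 if there is no such pair;
   the norms being nonnegative, a max seeded with 0 is the same thing). *)
Definition diffs (B C : {fset pt b}) : {fset 'rV[int]_b} :=
  [fset (ij.1 - ij.2)%R | ij in (proj C `*` proj B)].

Definition bracket (B C : {fset pt b}) (M : pt b -> pt b -> R[i]) (n : 'rV[int]_b) : R :=
  if n \in diffs B C then
    \big[Num.max/0]_(ij <- proj C `*` proj B | (ij.1 - ij.2)%R == n) blocknorm B C M ij.1 ij.2
  else 0.

Definition trinorm (B C : {fset pt b}) (M : pt b -> pt b -> R[i]) (s : R) : R :=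
  Num.sqrt (K0 * (\sum_(n <- diffs B C) bracket B C M n ^+ 2 * japan R n `^ (2 * s))%R)%R.

(* rows of C with first component i, i.e. the row set of M_{i} *)
Definition rowsat (C : {fset pt b}) (i : 'rV[int]_b) : {fset pt b} :=
  [fset p in C | p.1 == i].

End Defs.

(* Main.v *)
Set Warnings "-all".
Require Import Defs.
From HB Require Import structures.
From mathcomp Require Import all_boot all_order all_algebra finmap complex reals exp.
From mathcomp Require Import zify ring lra.
Import Order.TTheory GRing.Theory Num.Theory.
Local Open Scope ring_scope.
Lemma hlp {z : int} {k : nat} : (absz z <= k)%N ->
  ((absz (z + k%:Z))%:Z = z + k%:Z) /\ (-(k%:Z) <= z <= k%:Z).
Proof.
move=> h.
have h2 : `|z| <= k%:Z by rewrite -abszE lez_nat.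
move: h2; rewrite ler_norml => /andP[h3 h4]; split; last by rewrite h3 h4.
rewrite abszE ger0_norm //; lia.
Qed.

Lemma count_box b k (F : seq 'rV[int]_b) : uniq F ->
  (forall n, n \in F -> (supnorm n <= k)%N) -> (size F <= (k.*2.+1)^b)%N.
Proof.
move=> uF H.
pose f := fun n : 'rV[int]_b => [ffun j : 'I_b => (inord (absz (n ord0 j + k%:Z)) : 'I_(k.*2.+1))].
have bnd : forall x j, x \in F -> (`|x ord0 j| <= k)%N.
  move=> x j /H; apply: leq_trans; rewrite /supnorm. apply: (@leq_bigmax _ (fun j0 => absz (x ord0 j0)) j).
have inj : {in F &, injective f}.
  move=> x y hx hy /ffunP e; apply/matrixP => i j; have -> : i = ord0 by apply/val_inj; case: i => -[].
  have := e j; rewrite !ffunE; move=> /(congr1 val) E.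
  have bx := bnd x j hx; have bY := bnd y j hy.
  have [ex1 /andP[hx1 hx2]] := hlp bx; have [ey1 /andP[hy1 hy2]] := hlp bY.
  move: E; rewrite /= !inordK.
  - by move/(congr1 (fun n : nat => n%:Z)); rewrite ex1 ey1; move/addIr.
  - by rewrite -ltz_nat ey1; lia.
  - by rewrite -ltz_nat ex1; lia.
have ->: size F = size (map f F) by rewrite size_map.
have um : uniq (map f F) by rewrite map_inj_in_uniq.
move/card_uniqP: um => <-.
apply: leq_trans (max_card _) _.
by rewrite card_ffun !card_ord.
Qed.

Lemma sum_u (R : realType) N : \sum_(k < N.+1) ((maxn k 1)%:R ^+ 2 : R)^-1 <= 3 - 2 / N.+1%:R.
Proof.
elim: N => [|N IH]; first by rewrite big_ord1 /= expr1n invr1; lra.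
rewrite big_ord_recr /=.
have -> : maxn N.+1 1 = N.+1 by lia.
set x : R := N.+1%:R in IH *.
have xp : 0 < x by rewrite ltr0n.
have -> : (N.+2%:R : R) = x + 1 by rewrite /x -natr1.
have key : 2 / x - 2 / (x + 1) - (x ^+ 2)^-1 = (x - 1) / (x ^+ 2 * (x + 1)).
  field; apply/andP; split; rewrite lt0r_neq0 //; have := ler0n R N; lra.
have : 0 <= (x - 1) / (x ^+ 2 * (x + 1)).
  apply: divr_ge0; last by apply: mulr_ge0; [exact: sqr_ge0|lra].
  by rewrite subr_ge0 /x ler1n.
rewrite -key; clearbody x; move=> h; lra.
Qed.

Lemma term_bd (R : realType) b k : (2 <= b)%N ->
  ((maxn k 1 ^ (2 * b))%:R : R)^-1 *+ (k.*2.+1 ^ b) <= 3 ^+ b * ((maxn k 1)%:R ^+ 2)^-1.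
Proof.
move=> hb.
set M := maxn k 1.
have Mp : (0 < M)%N by rewrite /M; lia.
have nat_ineq : (k.*2.+1 ^ b * M ^ 2 <= 3 ^ b * M ^ (2 * b))%N.
  have h1 : (k.*2.+1 ^ b <= (3 * M) ^ b)%N by rewrite leq_exp2r; rewrite /M; lia.
  have h2 : (M ^ 2 <= M ^ b)%N by apply: leq_pexp2l.
  apply: leq_trans (leq_mul h1 h2) _.
  by rewrite expnMn -mulnA -expnD mul2n -addnn.
have Mr : (0 : R) < M%:R by rewrite ltr0n.
rewrite -[X in X <= _]mulr_natl -!natrX.
rewrite ler_pdivlMr ?ltr0n ?expn_gt0 ?Mp // mulrAC.
rewrite ler_pdivrMr ?ltr0n ?expn_gt0 ?Mp //.
by rewrite -!natrM ler_nat.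
Qed.

Lemma sum_japan (R : realType) b (F : seq 'rV[int]_b) : (2 <= b)%N -> uniq F ->
  \sum_(n <- F) ((japan R n) ^+ (2 * b))^-1 <= 3 ^+ b * 3.
Proof.
move=> hb uF.
set N := (\max_(n <- F) supnorm n)%N.
have hN : forall n, n \in F -> (supnorm n < N.+1)%N.
  move=> n nF; rewrite ltnS; exact: (leq_bigmax_seq n nF).

rewrite (_ : \sum_(n <- F) _ = \sum_(k < N.+1) \sum_(n <- F | supnorm n == k)
     ((japan R n) ^+ (2 * b))^-1); last first.
  under [RHS]eq_bigr do rewrite big_mkcond /=.
  rewrite exchange_big /= [LHS]big_seq [RHS]big_seq; apply: eq_bigr => n nF.
  rewrite -big_mkcond /= (big_pred1 (Ordinal (hN n nF))) //.
apply: le_trans (_ : _ <= \sum_(k < N.+1) 3 ^+ b * ((maxn k 1)%:R ^+ 2)^-1) _.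
  apply: ler_sum => k _.
  rewrite (eq_bigr (fun _ => ((maxn k 1 ^ (2 * b))%:R : R)^-1)); last first.
    by move=> n /eqP <-; rewrite /japan natrX.
  rewrite big_const_seq iter_addr_0; apply: le_trans _ (term_bd R b k hb).
  apply: ler_wpMn2l; first by rewrite invr_ge0 ler0n.
  rewrite -size_filter; apply: count_box; first exact: filter_uniq.
  by move=> n; rewrite mem_filter => /andP[/eqP -> _].
rewrite -mulr_sumr ler_pM2l ?exprn_gt0 //.
apply: le_trans (sum_u R N) _.
have : 0 <= 2 / (N.+1%:R : R) by rewrite divr_ge0 ?ler0n.
by move=> h; rewrite lerBlDr lerDl.
Qed.

Lemma bits_rowsat b (C : {fset pt b}) i : bits (rowsat C i) i = bits C i.
Proof.
rewrite /bits; apply: eq_filter => a; rewrite /rowsat !inE /= eqxx andbT //.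
Qed.

Lemma blocknorm_rowsat (R : realType) b (nrm : forall m n, 'M[R[i]]_(m, n) -> R)
  (B C : {fset pt b}) M i i' :
  blocknorm nrm B (rowsat C i) M i i' = blocknorm nrm B C M i i'.
Proof.
rewrite /blocknorm /block.
by rewrite bits_rowsat.
Qed.

Lemma mem_proj_rowsat b (C : {fset pt b}) i : (i \in proj C) -> i \in proj (rowsat C i).
Proof.
case/imfsetP => p pC ->; apply/imfsetP; exists p => //.
by rewrite /rowsat !inE /= eqxx andbT.
Qed.

Lemma japan_gt0 (R : realType) b (n : 'rV[int]_b) : 0 < japan R n.
Proof. by rewrite /japan ltr0n; lia. Qed.

Lemma stepA (R : realType) b (nrm : forall m n, 'M[R[i]]_(m, n) -> R) (K0 : R)
  (hK0 : 0 < K0) (B C : {fset pt b}) M (s m : R) i i' :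
  i \in proj C -> i' \in proj B ->
  trinorm nrm K0 B (rowsat C i) M s <= m ->
  0 <= blocknorm nrm B C M i i' ->
  K0 * (blocknorm nrm B C M i i' ^+ 2 * japan R (i - i') `^ (2 * s)) <= m ^+ 2.
Proof.
move=> iC i'B hTm bn0.
set T := trinorm _ _ _ _ _ _ in hTm.
have T0 : 0 <= T by exact: sqrtr_ge0.
pose S := \sum_(n <- diffs B (rowsat C i)) bracket nrm B (rowsat C i) M n ^+ 2 * japan R n `^ (2 * s).
have tge0 : forall n, 0 <= bracket nrm B (rowsat C i) M n ^+ 2 * japan R n `^ (2 * s).
  by move=> n; rewrite mulr_ge0 ?sqr_ge0 ?powR_ge0.
have S0 : 0 <= S by apply: sumr_ge0 => n _.
have hT2 : T ^+ 2 = K0 * S by rewrite /T /trinorm sqr_sqrtr // mulr_ge0 // ltW.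
have hTm2 : T ^+ 2 <= m ^+ 2 by rewrite !expr2; apply: ler_pM.
set n := i - i'.
have nD : n \in diffs B (rowsat C i).
  apply/imfsetP; exists (i, i') => //=.
  by rewrite in_fsetM /= mem_proj_rowsat.
have brk : blocknorm nrm B C M i i' <= bracket nrm B (rowsat C i) M n.
  rewrite /bracket nD -(@blocknorm_rowsat R b nrm B C M i i').
  apply: (le_bigmax_seq _ (i, i')) => //=.
  by rewrite in_fsetM /= mem_proj_rowsat.
have tS : bracket nrm B (rowsat C i) M n ^+ 2 * japan R n `^ (2 * s) <= S.
  rewrite /S (bigD1_seq n) //= ?fset_uniq //.
  by rewrite lerDl; apply: sumr_ge0 => k _.
apply: le_trans hTm2; rewrite hT2 ler_pM2l //.
apply: le_trans tS; apply: ler_wpM2r; first exact: powR_ge0.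
by rewrite !expr2; apply: ler_pM.
Qed.

Lemma stepB (R : realType) b (nrm : forall m n, 'M[R[i]]_(m, n) -> R) (K0 : R)
  (hK0 : 0 < K0) (B C : {fset pt b}) M (s m : R) (bb : nat) n :
  (forall i, i \in proj C -> trinorm nrm K0 B (rowsat C i) M (s + bb%:R) <= m) ->
  bracket nrm B C M n ^+ 2 * japan R n `^ (2 * s) <=
    m ^+ 2 / K0 * (japan R n ^+ (2 * bb))^-1.
Proof.
move=> hyp.
have jp := @japan_gt0 R b n.
set j := japan R n in jp *.
have e : j `^ (2 * (s + bb%:R)) = j `^ (2 * s) * j ^+ (2 * bb).
  by rewrite mulrDr powRD ?(gt_eqF jp) ?implybT // -natrM powR_mulrn // ltW.
have P1 := powR_gt0 (2 * s) jp.
have P2 : 0 < j ^+ (2 * bb) by rewrite exprn_gt0.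
have m0 : 0 <= m ^+ 2 / K0 by rewrite divr_ge0 ?sqr_ge0 // ltW.
pose Y := Num.sqrt (m ^+ 2 / K0 / j `^ (2 * (s + bb%:R))).
have brY : bracket nrm B C M n <= Y.
  rewrite /bracket; case: ifP => _; last exact: sqrtr_ge0.
  rewrite big_seq_cond; apply: bigmax_le; first exact: sqrtr_ge0.
  move=> [i i'] /andP[]; rewrite in_fsetM /= => /andP[iC i'B] /eqP hn.
  case: (leP (blocknorm nrm B C M i i') 0) => h.
    by apply: le_trans h _; exact: sqrtr_ge0.
  have h0 := ltW h.
  have A := @stepA R b nrm K0 hK0 B C M _ _ _ _ iC i'B (hyp i iC) h0; rewrite hn in A.
  rewrite -(ger0_norm h0) -sqrtr_sqr; apply: ler_wsqrtr.
  rewrite ler_pdivlMr ?powR_gt0 // ler_pdivlMr // mulrC.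
  by rewrite -/j in A.
have br0 : 0 <= bracket nrm B C M n.
  by rewrite /bracket; case: ifP => _ //; exact: bigmax_ge_id.
have br2 : bracket nrm B C M n ^+ 2 <= m ^+ 2 / K0 / j `^ (2 * (s + bb%:R)).
  rewrite -[X in _ <= X]sqr_sqrtr; last by rewrite divr_ge0 // powR_ge0.
  by rewrite !expr2; apply: ler_pM.
apply: le_trans (ler_wpM2r (ltW P1) br2) _.
rewrite e le_eqVlt; apply/orP; left; apply/eqP.
by field; rewrite (gt_eqF P1) (gt_eqF P2) (gt_eqF hK0).
Qed.

Theorem lemma3p7 (R : realType) (d nu : nat) (hd : (0 < d)%N) (hnu : (0 < nu)%N)
  (nrm : forall m n, 'M[R[i]]_(m, n) -> R) (Hnrm : small_norm nrm)
  (K0 : R) (hK0 : 0 < K0) :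
  exists K1 : R, 0 < K1 /\
    forall (B C : {fset pt (nu + d)}) (M : pt (nu + d) -> pt (nu + d) -> R[i]) (s : R),
      0 <= s ->
      trinorm nrm K0 B C M s <=
      K1 * \big[Num.max/0]_(i <- proj C) trinorm nrm K0 B (rowsat C i) M (s + (nu + d)%:R).
Proof.
have hb : (2 <= nu + d)%N by lia.
have K1g : (1 : R) <= 3 ^+ (nu + d) * 3.
  by rewrite -[3 : R]/(3%:R) -natrX -natrM ler1n muln_gt0 expn_gt0.
exists (3 ^+ (nu + d) * 3); split; first by apply: lt_le_trans K1g.
move=> B C M s hs.
set K := 3 ^+ (nu + d) * 3 in K1g *.
set m := \big[Num.max/0]_(i <- proj C) _.
have hyp : forall i, i \in proj C ->
    trinorm nrm K0 B (rowsat C i) M (s + (nu + d)%:R) <= m.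
  by move=> i iC; apply: (le_bigmax_seq _ i).
have m0 : 0 <= m by exact: bigmax_ge_id.
have hS : \sum_(n <- diffs B C) bracket nrm B C M n ^+ 2 * japan R n `^ (2 * s)
    <= m ^+ 2 / K0 * K.
  apply: le_trans (ler_sum _ (fun n _ => @stepB R _ nrm K0 hK0 B C M s m (nu + d) n hyp)) _.
  rewrite -mulr_sumr ler_wpM2l ?divr_ge0 ?sqr_ge0 ?(ltW hK0) //.
  exact: sum_japan (fset_uniq _).
have K0p : 0 <= K by apply: le_trans K1g.
rewrite /trinorm -(ger0_norm (mulr_ge0 K0p m0)) -sqrtr_sqr; apply: ler_wsqrtr.
apply: le_trans (ler_wpM2l (ltW hK0) hS) _.
have -> : K0 * (m ^+ 2 / K0 * K) = m ^+ 2 * K by field; rewrite gt_eqF.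
rewrite exprMn [X in _ <= X]mulrC ler_wpM2l ?sqr_ge0 // expr2.
by rewrite ler_peMl.
Qed.
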